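(* Let $\Gamma=(V,\nu,\mu)$ be a fuzzy graph on $n$ vertices with maximum fuzzy degree $\Delta$ and minimum fuzzy degree $\delta$. Then $$\sigma^*(\Gamma)\le 2n+\frac{(\Delta-\delta)^2}{4}.$$
   Context: A fuzzy graph $\Gamma=(V,\nu,\mu)$ consists of a finite vertex set $V$ with $|V|=n\ge1$, a map $\nu:V\to[0,1]$, and a symmetric map $\mu:V\times V\to[0,1]$ with $\mu(u,v)\le\min(\nu(u),\nu(v))$. The fuzzy degree is $d_\Gamma(v)=\sum_{u\ne v}\mu(v,u)$, the fuzzy size is $\mathrm{ew}(\Gamma)=\frac12\sum_v d_\Gamma(v)$, $\lambda=2\,\mathrm{ew}(\Gamma)/n$, and the fuzzy sigma index is $\sigma^*(\Gamma)=\frac1n\sum_{v}(d_\Gamma(v)-\lambda)^2$. $\Delta=\max_v d_\Gamma(v)$, $\delta=\min_v d_\Gamma(v)$. *)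

(* Defs.v *)
From mathcomp Require Import all_boot all_order all_algebra.
Set Implicit Arguments. Unset Strict Implicit. Unset Printing Implicit Defensive.
Import Order.TTheory GRing.Theory Num.Theory.
Local Open Scope ring_scope.

Section FuzzyGraph.
Variables (R : realFieldType) (V : finType).

Definition is_fuzzy_graph (nu : V -> R) (mu : V -> V -> R) : Prop :=
  [/\ (forall v, 0 <= nu v <= 1),
      (forall u v, 0 <= mu u v <= 1),
      (forall u v, mu u v = mu v u) &
      (forall u v, mu u v <= Num.min (nu u) (nu v))].

Definition fdeg (mu : V -> V -> R) (v : V) : R := \sum_(u | u != v) mu v u.

Definition fsize (mu : V -> V -> R) : R := 2^-1 * \sum_v fdeg mu v.

Definition forder : R := #|V|%:R.

Definition flambda (mu : V -> V -> R) : R := 2 * fsize mu / forder.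

Definition fsigma (mu : V -> V -> R) : R :=
  forder^-1 * \sum_v (fdeg mu v - flambda mu) ^+ 2.

(* maximum / minimum fuzzy degree (V nonempty; 0 if V is empty) *)
Definition fmaxdeg (mu : V -> V -> R) : R :=
  if [pick v : V] is Some v0 then \big[Num.max/fdeg mu v0]_v fdeg mu v else 0.
Definition fmindeg (mu : V -> V -> R) : R :=
  if [pick v : V] is Some v0 then \big[Num.min/fdeg mu v0]_v fdeg mu v else 0.

End FuzzyGraph.

(* Main.v *)
Require Import Defs.
From mathcomp Require Import all_boot all_order all_algebra.
From mathcomp Require Import ring lra.
Import Order.TTheory GRing.Theory Num.Theory.
Local Open Scope ring_scope.

Theorem proposition2p7 (R : realFieldType) (V : finType)
    (nu : V -> R) (mu : V -> V -> R) :
  (0 < #|V|)%N ->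
  is_fuzzy_graph nu mu ->
  fsigma mu <= 2 * forder R V
              + (fmaxdeg mu - fmindeg mu) ^+ 2 / 4.
Proof.
move=> hV _.
set d := fdeg mu.
set D := fmaxdeg mu; set dl := fmindeg mu.
have hb : forall v, dl <= d v <= D.
  move=> v; rewrite /dl /D /fmindeg /fmaxdeg.
  case: pickP => [v0 _|/(_ v)//].
  by rewrite bigmin_le le_bigmax.
set n := forder R V.
have n0 : 0 < n by rewrite /n /forder ltr0n.
set lam := flambda mu.
have hlam : lam = (\sum_v d v) / n.
  rewrite /lam /flambda /fsize; congr (_ / _).
  by rewrite mulrA divff ?mul1r // pnatr_eq0.
set m := (D + dl) / 2.
have hsum0 : \sum_v (d v - lam) = 0.
  rewrite sumrB sumr_const /n /forder -/n.
  rewrite hlam -mulr_natr -/(forder R V) -/n mulrVK ?unitfE ?subrr //.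
  by rewrite gt_eqF.
have e : \sum_v (d v - m) ^+ 2 =
   \sum_v (d v - lam) ^+ 2 + 2 * (lam - m) * \sum_v (d v - lam)
   + \sum_(v : V) (lam - m) ^+ 2.
  rewrite mulr_sumr -!big_split /=; apply: eq_bigr => v _; ring.
rewrite hsum0 mulr0 addr0 sumr_const -/n in e.
have h1 : \sum_v (d v - lam) ^+ 2 <= \sum_v (d v - m) ^+ 2.
  rewrite e lerDl -mulr_natr; apply: mulr_ge0; [exact: sqr_ge0|exact: ler0n].
have h2 : \sum_v (d v - m) ^+ 2 <= \sum_(v : V) ((D - dl) ^+ 2 / 4).
  apply: ler_sum => v _; have /andP[a b] := hb v; rewrite /m; nra.
have : fsigma mu <= (D - dl) ^+ 2 / 4.
  rewrite /fsigma -/n -/d -/lam.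
  rewrite -(ler_pM2l n0) mulrA mulrV ?unitfE ?gt_eqF // mul1r mulrC.
  apply: (le_trans h1 (le_trans h2 _)).
  by rewrite sumr_const /n /forder mulr_natr.
move=> h; apply: le_trans h _; rewrite lerDr; lra.
Qed.
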